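(* For every indecomposable instrument $\mathcal{I}\in\mathrm{Ins}(\Omega,\mathcal{H},\mathcal{K})$ there exists a dilation $(\mathcal{H}_A,W,\mathsf{E})$ of $\mathcal{I}$ such that the complementary instrument $\mathcal{I}^C\in\mathrm{Ins}(\Omega,\mathcal{H},\mathcal{H}_A)$ relative to it is the measure-and-prepare instrument $\mathcal{I}^C_x(\varrho)=\mathrm{tr}[\mathsf{A}^{\mathcal{I}}(x)\varrho]\,|\varphi_x\rangle\langle\varphi_x|$ for all $x\in\Omega$ and states $\varrho$, for some orthonormal basis $\{\varphi_x\}_{x\in\Omega}$ of $\mathcal{H}_A$.
   Context: All Hilbert spaces are finite-dimensional and complex, and all outcome sets are finite. A POVM $\mathsf{E}\in\mathcal{O}(\Omega,\mathcal{H})$ is a map $x\mapsto\mathsf{E}(x)$ to positive operators with $\sum_x\mathsf{E}(x)=I$. An instrument $\mathcal{I}\in\mathrm{Ins}(\Omega,\mathcal{H},\mathcal{K})$ is a family $(\mathcal{I}_x)_{x\in\Omega}$ of completely positive trace-nonincreasing linear maps $\mathcal{L}(\mathcal{H})\to\mathcal{L}(\mathcal{K})$ whose sum is trace preserving; its induced POVM is given by $\mathrm{tr}[\mathsf{A}^{\mathcal{I}}(x)\varrho]=\mathrm{tr}[\mathcal{I}_x(\varrho)]$. $\mathcal{I}$ is indecomposable if each nonzero $\mathcal{I}_x$ has Kraus rank 1, i.e. $\mathcal{I}_x(\varrho)=K_x\varrho K_x^*$ for an operator $K_x:\mathcal{H}\to\mathcal{K}$. A dilation of $\mathcal{I}$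 is a triple $(\mathcal{H}_A,W,\mathsf{E})$ with $W:\mathcal{H}\to\mathcal{H}_A\otimes\mathcal{K}$ an isometry and $\mathsf{E}\in\mathcal{O}(\Omega,\mathcal{H}_A)$ such that $\mathcal{I}_x(\varrho)=\mathrm{tr}_{\mathcal{H}_A}[W\varrho W^*(\mathsf{E}(x)\otimes I_{\mathcal{K}})]$; the complementary instrument relative to it is $\mathcal{I}^C_x(\varrho)=\mathrm{tr}_{\mathcal{K}}[(\sqrt{\mathsf{E}(x)}\otimes I_{\mathcal{K}})W\varrho W^*(\sqrt{\mathsf{E}(x)}\otimes I_{\mathcal{K}})]$. An instrument is measure-and-prepare if it has the form $\varrho\mapsto\mathrm{tr}[\mathsf{A}(x)\varrho]\xi_x$ for a POVM $\mathsf{A}$ and states $\xi_x$. *)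

(* Defs.v *)
(* Finite-dimensional quantum instruments over a generic
   numeric closed field C (e.g. the complex numbers), with Hilbert spaces
   C^n represented by column vectors 'cV[C]_n and operators by matrices. *)
From HB Require Import structures.
From mathcomp Require Import all_boot all_order all_algebra.
From mathcomp Require Import mxtens.
Set Implicit Arguments. Unset Strict Implicit. Unset Printing Implicit Defensive.
Import Order.TTheory GRing.Theory Num.Theory.
Local Open Scope ring_scope.

Section Quantum.
Variable C : numClosedFieldType.

Definition dag {m n : nat} (A : 'M[C]_(m, n)) : 'M[C]_(n, m) :=
  \matrix_(i, j) (A j i)^*.

Definition psd {n : nat} (A : 'M[C]_n) : Prop :=
  forall v : 'cV[C]_n, 0 <= (dag v *m A *m v) 0 0.

Definition state {n : nat} (rho : 'M[C]_n) : Prop := psd rho /\ \tr rho = 1.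

Definition povm (T : finType) {n : nat} (E : T -> 'M[C]_n) : Prop :=
  (forall x, psd (E x)) /\ \sum_(x : T) E x = 1%:M.

Definition linmap {n m : nat} (Phi : 'M[C]_n -> 'M[C]_m) : Prop :=
  forall (a : C) (X Y : 'M[C]_n), Phi (a *: X + Y) = a *: Phi X + Phi Y.

Definition blk {k n : nat} (X : 'M[C]_(k * n)) (i j : 'I_k) : 'M[C]_n :=
  \matrix_(p, q) X (mxtens_index (i, p)) (mxtens_index (j, q)).

(* id_k (x) Phi *)
Definition ampl {k n m : nat} (Phi : 'M[C]_n -> 'M[C]_m) (X : 'M[C]_(k * n))
  : 'M[C]_(k * m) :=
  \matrix_(r, s) Phi (blk X (mxtens_unindex r).1 (mxtens_unindex s).1)
                     (mxtens_unindex r).2 (mxtens_unindex s).2.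

Definition cp {n m : nat} (Phi : 'M[C]_n -> 'M[C]_m) : Prop :=
  forall (k : nat) (X : 'M[C]_(k * n)), psd X -> psd (ampl Phi X).

Definition trace_nonincr {n m : nat} (Phi : 'M[C]_n -> 'M[C]_m) : Prop :=
  forall rho : 'M[C]_n, psd rho -> \tr (Phi rho) <= \tr rho.

Definition instrument (T : finType) {n m : nat}
  (I : T -> 'M[C]_n -> 'M[C]_m) : Prop :=
  (forall x, [/\ linmap (I x), cp (I x) & trace_nonincr (I x)]) /\
  (forall rho : 'M[C]_n, \tr (\sum_(x : T) I x rho) = \tr rho).

Definition induced_povm (T : finType) {n m : nat}
  (I : T -> 'M[C]_n -> 'M[C]_m) (A : T -> 'M[C]_n) : Prop :=
  forall x (rho : 'M[C]_n), \tr (A x *m rho) = \tr (I x rho).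

Definition indecomposable (T : finType) {n m : nat}
  (I : T -> 'M[C]_n -> 'M[C]_m) : Prop :=
  forall x, (exists rho, I x rho <> 0) ->
    exists K : 'M[C]_(m, n), forall rho, I x rho = K *m rho *m dag K.

(* partial traces on C^a (x) C^m *)
Definition ptrA {a m : nat} (X : 'M[C]_(a * m)) : 'M[C]_m :=
  \matrix_(p, q) \sum_(i < a) X (mxtens_index (i, p)) (mxtens_index (i, q)).
Definition ptrK {a m : nat} (X : 'M[C]_(a * m)) : 'M[C]_a :=
  \matrix_(i, j) \sum_(p < m) X (mxtens_index (i, p)) (mxtens_index (j, p)).

Definition isometry {n k : nat} (W : 'M[C]_(k, n)) : Prop :=
  dag W *m W = 1%:M.

Definition dilation (T : finType) {n m a : nat}
  (I : T -> 'M[C]_n -> 'M[C]_m) (W : 'M[C]_(a * m, n)) (E : T -> 'M[C]_a)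
  : Prop :=
  [/\ isometry W, povm E &
      forall x (rho : 'M[C]_n),
        I x rho = ptrA (W *m rho *m dag W *m (E x *t (1%:M : 'M[C]_m)))].

Definition psd_sqrt {a : nat} (S P : 'M[C]_a) : Prop := psd S /\ S *m S = P.

Definition compl_map {n m a : nat} (W : 'M[C]_(a * m, n)) (S : 'M[C]_a)
  (rho : 'M[C]_n) : 'M[C]_a :=
  ptrK ((S *t (1%:M : 'M[C]_m)) *m W *m rho *m dag W
        *m (S *t (1%:M : 'M[C]_m))).

Definition onb (T : finType) {a : nat} (phi : T -> 'cV[C]_a) : Prop :=
  (forall x y, dag (phi x) *m phi y = (x == y)%:R%:M) /\
  \sum_(x : T) phi x *m dag (phi x) = 1%:M.

End Quantum.

(* Main.v *)
Require Import Defs.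
From HB Require Import structures.
From mathcomp Require Import all_boot all_order all_algebra.
From mathcomp Require Import mxtens.
From mathcomp Require Import ring.
From Stdlib Require Import Classical ClassicalEpsilon.
Import Order.TTheory GRing.Theory Num.Theory.
Local Open Scope ring_scope.
Set Implicit Arguments. Unset Strict Implicit. Unset Printing Implicit Defensive.

Section Aux.
Variable C : numClosedFieldType.

Lemma dagE m n (A : 'M[C]_(m, n)) i j : dag A i j = (A j i)^*.
Proof. by rewrite mxE. Qed.

Lemma dagD m n (A B : 'M[C]_(m, n)) : dag (A + B) = dag A + dag B.
Proof. by apply/matrixP => i j; rewrite !mxE rmorphD. Qed.

Lemma dagZ m n c (A : 'M[C]_(m, n)) : dag (c *: A) = c^* *: dag A.
Proof. by apply/matrixP => i j; rewrite !mxE rmorphM. Qed.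

Lemma qe n (S : 'M[C]_n) j k :
  dag (delta_mx j 0 : 'cV[C]_n) *m S *m delta_mx k 0 = (S j k)%:M.
Proof.
have -> : dag (delta_mx j 0 : 'cV[C]_n) = delta_mx 0 j.
  by apply/matrixP => a b; rewrite !mxE rmorph_nat andbC.
rewrite -rowE -colE; apply/matrixP => a b; rewrite !ord1 !mxE /=.
by rewrite mulr1n.
Qed.

Lemma qform2 n (S : 'M[C]_n) j k c :
  (dag (delta_mx j 0 + c *: delta_mx k 0 : 'cV[C]_n) *m S
     *m (delta_mx j 0 + c *: delta_mx k 0 : 'cV[C]_n)) 0 0
  = S j j + c * S j k + c^* * S k j + c^* * c * S k k.
Proof.
rewrite dagD dagZ !mulmxDl !mulmxDr -!scalemxAl -!scalemxAr !qe.
rewrite !scale_scalar_mx -!raddfD /= mxE mulr1n; ring.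
Qed.

Lemma psd_diag n (S : 'M[C]_n) j : psd S -> 0 <= S j j.
Proof.
move=> hS; have := hS (delta_mx j 0); rewrite qe mxE mulr1n //.
Qed.

Lemma psd_herm n (S : 'M[C]_n) j k : psd S -> S k j = (S j k)^*.
Proof.
move=> hS.
have hp := psd_diag j hS; have hq := psd_diag k hS.
have h1 := hS (delta_mx j 0 + 1 *: delta_mx k 0).
have h2 := hS (delta_mx j 0 + 'i *: delta_mx k 0).
rewrite qform2 in h1; rewrite qform2 in h2.
move/ger0_real/CrealP: h1; move/ger0_real/CrealP: h2.
rewrite !rmorphD !rmorphM /= !conjCK conjCi (conj_Creal (ger0_real hp)).
rewrite (conj_Creal (ger0_real hq)) rmorph1.
rewrite !mul1r => e2 e1.
set a := S j k in e1 e2 *; set b := S k j in e1 e2 *.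
have f1 : a^* + b^* = a + b.
  apply/eqP; rewrite -subr_eq0; apply/eqP.
  transitivity ((S j j + a^* + b^* + S k k) - (S j j + a + b + S k k)); first ring.
  by rewrite e1 subrr.
have f2 : 'i * (a^* - b^*) = 'i * (b - a).
  apply/eqP; rewrite -subr_eq0; apply/eqP.
  transitivity (-((S j j + - 'i * a^* + 'i * b^* + 'i * - 'i * S k k) - (S j j + 'i * a + - 'i * b + - 'i * 'i * S k k))); first ring.
  by rewrite e2 subrr oppr0.
move/(mulfI (neq0Ci C)): f2 => f2.
apply/eqP; rewrite -subr_eq0.
have : (b - a^*) *+ 2 = 0.
  transitivity ((a + b) - (a^* + b^*) + ((b - a) - (a^* - b^*))); first ring.
  by rewrite f1 f2 !subrr addr0.
by move/eqP; rewrite mulrn_eq0.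
Qed.


Lemma psd_sqrt_delta a (S : 'M[C]_a) k :
  psd S -> S *m S = delta_mx k k -> S = delta_mx k k.
Proof.
move=> hS hSS.
have hz : forall j b, j != k -> S j b = 0.
  move=> j b hjk.
  have : (S *m S) j j = 0 by rewrite hSS mxE (negbTE hjk).
  rewrite mxE => h0.
  have h0' : \sum_(c < a) S j c * (S j c)^* = 0.
    by rewrite -[RHS]h0; apply: eq_bigr => c _; rewrite (psd_herm j c hS).
  move: (psumr_eq0P (fun c _ => mul_conjC_ge0 (S j c)) h0') => /(_ b isT).
  by move/eqP; rewrite mul_conjC_eq0 => /eqP.
have hz' : forall b j, j != k -> S b j = 0.
  by move=> b j hjk; rewrite (psd_herm j b hS) hz ?conjC0.
have hkk : S k k = 1.
  have : (S *m S) k k = 1 by rewrite hSS mxE !eqxx.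
  rewrite mxE (bigD1 k) //= big1 ?addr0; last by move=> c hc; rewrite hz' ?mul0r.
  rewrite -expr2 => /eqP; rewrite sqrf_eq1 => /orP [/eqP // | /eqP h].
  by have := psd_diag k hS; rewrite h ler0N1.
apply/matrixP => i j; rewrite mxE.
case: (eqVneq i k) => [-> | hik]; last by rewrite hz.
case: (eqVneq j k) => [-> | hjk]; last by rewrite hz' // andbF.
by rewrite hkk.
Qed.

Lemma sum_tens (a m : nat) (F : 'I_(a * m) -> C) :
  \sum_r F r = \sum_(i < a) \sum_(p < m) F (mxtens_index (i, p)).
Proof.
rewrite pair_big /= (reindex (@mxtens_index a m)) /=.
  by apply: eq_bigr => -[i p] _.
by exists (@mxtens_unindex a m) => ? _; rewrite ?mxtens_indexK ?mxtens_unindexK.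
Qed.

Lemma sum_enum (T : finType) (V : nmodType) (F : T -> V) :
  \sum_x F x = \sum_(i < #|T|) F (enum_val i).
Proof. by rewrite (reindex (@enum_val T T)) //; apply: onW_bij; exact: enum_val_bij. Qed.

Lemma tr_delta n (M : 'M[C]_n) i j : \tr (M *m delta_mx j i) = M i j.
Proof.
rewrite /mxtrace (bigD1 i) //= big1 ?addr0.
  rewrite mxE (bigD1 j) //= big1 ?addr0; first by rewrite mxE !eqxx mulr1.
  by move=> c hc; rewrite mxE (negbTE hc) mulr0.
by move=> c hc; rewrite mxE big1 // => d _; rewrite mxE (negbTE hc) andbF mulr0.
Qed.

Lemma mx_tr_eq n (M N : 'M[C]_n) :
  (forall rho, \tr (M *m rho) = \tr (N *m rho)) -> M = N.
Proof. by move=> h; apply/matrixP => i j; rewrite -!tr_delta h. Qed.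


Lemma dag_delta n (i : 'I_n) : dag (delta_mx i 0 : 'cV[C]_n) = delta_mx 0 i.
Proof. by apply/matrixP => a b; rewrite !mxE rmorph_nat andbC. Qed.

Lemma mul_mx_deltaE p q r (A : 'M[C]_(p, q)) k (l : 'I_r) i j :
  (A *m delta_mx k l) i j = A i k * (j == l)%:R.
Proof.
rewrite mxE (bigD1 k) //= big1 ?addr0 => [|c hc]; first by rewrite mxE eqxx.
by rewrite mxE (negbTE hc) mulr0.
Qed.

Lemma mul_delta_mxE p q r (A : 'M[C]_(q, r)) (k : 'I_p) l i j :
  (delta_mx k l *m A) i j = (i == k)%:R * A l j.
Proof.
rewrite mxE (bigD1 l) //= big1 ?addr0 => [|c hc]; first by rewrite mxE eqxx andbT.
by rewrite mxE (negbTE hc) andbF mul0r.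
Qed.

Lemma sum_delta a : \sum_(i < a) (delta_mx i i : 'M[C]_a) = 1%:M.
Proof.
apply/matrixP => i j; rewrite summxE !mxE (bigD1 i) //= big1 ?addr0 => [|c hc].
  by rewrite mxE eqxx eq_sym.
by rewrite mxE eq_sym (negbTE hc).
Qed.

Lemma mul_tens1E a m (k : 'I_a) (M : 'M[C]_(a * m)) r i q :
  (M *m (delta_mx k k *t (1%:M : 'M[C]_m))) r (mxtens_index (i, q))
  = (i == k)%:R * M r (mxtens_index (k, q)).
Proof.
rewrite mxE sum_tens (bigD1 k) //= [X in _ + X]big1 ?addr0 => [|j hj].
  rewrite (bigD1 q) //= [X in _ + X]big1 ?addr0 => [|p hp].
    by rewrite tensmxE !mxE !eqxx /= mulr1 mulrC.
  by rewrite tensmxE !mxE (negbTE hp) mulr0n !mulr0.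
by apply: big1 => p _; rewrite tensmxE !mxE (negbTE hj) /= mul0r mulr0.
Qed.

Lemma tens1_mulE a m (k : 'I_a) (M : 'M[C]_(a * m)) s i p :
  ((delta_mx k k *t (1%:M : 'M[C]_m)) *m M) (mxtens_index (i, p)) s
  = (i == k)%:R * M (mxtens_index (k, p)) s.
Proof.
rewrite mxE sum_tens (bigD1 k) //= [X in _ + X]big1 ?addr0 => [|j hj].
  rewrite (bigD1 p) //= [X in _ + X]big1 ?addr0 => [|q hq].
    by rewrite tensmxE !mxE !eqxx /= andbT mulr1.
  by rewrite tensmxE !mxE (eq_sym p) (negbTE hq) mulr0 mul0r.
by apply: big1 => q _; rewrite tensmxE !mxE (negbTE hj) /= andbF !mul0r.
Qed.

End Aux.

Theorem lemma1 (C : numClosedFieldType) (T : finType) (n m : nat)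
  (I : T -> 'M[C]_n -> 'M[C]_m) (A : T -> 'M[C]_n) :
  instrument I -> indecomposable I -> induced_povm I A ->
  exists (a : nat) (W : 'M[C]_(a * m, n)) (E : T -> 'M[C]_a),
    dilation I W E /\
    exists phi : T -> 'cV[C]_a,
      onb phi /\
      forall x : T,
        (exists S, psd_sqrt S (E x)) /\
        forall S : 'M[C]_a, psd_sqrt S (E x) ->
          forall rho : 'M[C]_n, state rho ->
            compl_map W S rho = \tr (A x *m rho) *: (phi x *m dag (phi x)).
Proof.
move=> [hI htr] hind hA.
have hK : forall x, exists K : 'M[C]_(m, n), forall rho, I x rho = K *m rho *m dag K.
  move=> x; case: (classic (exists rho, I x rho <> 0)) => [h|h]; first exact: hind.
  exists 0 => rho; rewrite !mul0mx; apply: NNPP => hne; apply: h; by exists rho.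
pose K x := proj1_sig (constructive_indefinite_description _ (hK x)).
have hKE : forall x rho, I x rho = K x *m rho *m dag (K x).
  by move=> x; exact: (proj2_sig (constructive_indefinite_description _ (hK x))).
pose W : 'M[C]_(#|T| * m, n) :=
  \matrix_(r, q) K (enum_val (mxtens_unindex r).1) (mxtens_unindex r).2 q.
have WE : forall i p q, W (mxtens_index (i, p)) q = K (enum_val i) p q.
  by move=> i p q; rewrite mxE mxtens_indexK.
have WX : forall p' (X : 'M[C]_(n, p')) i p t,
    (W *m X) (mxtens_index (i, p)) t = (K (enum_val i) *m X) p t.
  by move=> p' X i p t; rewrite !mxE; apply: eq_bigr => u _; rewrite WE.
have XdW : forall p' (Y : 'M[C]_(p', n)) s j q,
    (Y *m dag W) s (mxtens_index (j, q)) = (Y *m dag (K (enum_val j))) s q.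
  by move=> p' Y s j q; rewrite !mxE; apply: eq_bigr => u _; rewrite !mxE mxtens_indexK.
have WrW : forall rho i p j q,
    (W *m rho *m dag W) (mxtens_index (i, p)) (mxtens_index (j, q))
    = (K (enum_val i) *m rho *m dag (K (enum_val j))) p q.
  by move=> rho i p j q; rewrite XdW -!mulmxA WX.
pose E x : 'M[C]_#|T| := delta_mx (enum_rank x) (enum_rank x).
have sumE : \sum_x E x = 1%:M.
  by rewrite sum_enum -(sum_delta C #|T|); apply: eq_bigr => i _; rewrite /E enum_valK.
exists #|T|, W, E; split.
  split.
  - have hsum : \sum_x dag (K x) *m K x = 1%:M.
      apply: mx_tr_eq => rho; rewrite mul1mx -(htr rho) mulmx_suml !raddf_sum /=.
      by apply: eq_bigr => x _; rewrite hKE [RHS]mxtrace_mulC !mulmxA.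
    rewrite /Defs.isometry -hsum; apply/matrixP => q q'.
    rewrite mxE summxE sum_tens sum_enum; apply: eq_bigr => i _.
    by rewrite mxE; apply: eq_bigr => p _; rewrite !dagE !WE.
  - split => // x v; rewrite mxE (bigD1 (enum_rank x)) //= [X in _ + X]big1 ?addr0.
      by rewrite mul_mx_deltaE eqxx mulr1 dagE mulrC mul_conjC_ge0.
    by move=> b hb; rewrite mul_mx_deltaE (negbTE hb) mulr0 mul0r.
  - move=> x rho; apply/matrixP => p q; rewrite hKE [RHS]mxE.
    rewrite (bigD1 (enum_rank x)) //= [X in _ + X]big1 ?addr0.
      by rewrite mul_tens1E eqxx mul1r WrW enum_rankK.
    by move=> i hi; rewrite mul_tens1E (negbTE hi) mul0r.
exists (fun x => delta_mx (enum_rank x) 0); split.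
  split.
    move=> x y; rewrite dag_delta mul_delta_mx_cond (can_eq enum_rankK).
    by case: (x == y); rewrite ?mulr1n ?mulr0n; apply/matrixP => a b; rewrite !ord1 !mxE.
  by rewrite -sumE; apply: eq_bigr => x _; rewrite dag_delta mul_delta_mx.
move=> x; split.
  exists (E x); split; last by rewrite mul_delta_mx.
  move=> v; rewrite mxE (bigD1 (enum_rank x)) //= [X in _ + X]big1 ?addr0.
    by rewrite mul_mx_deltaE eqxx mulr1 dagE mulrC mul_conjC_ge0.
  by move=> b hb; rewrite mul_mx_deltaE (negbTE hb) mulr0 mul0r.
move=> S [hS hSS] rho _.
rewrite (psd_sqrt_delta hS hSS) /compl_map dag_delta mul_delta_mx hA hKE.
have -> : (E x *t (1%:M : 'M[C]_m)) *m W *m rho *m dag W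
          = (E x *t (1%:M : 'M[C]_m)) *m (W *m rho *m dag W) by rewrite !mulmxA.
apply/matrixP => i j; rewrite !mxE.
under eq_bigr => p _ do rewrite mul_tens1E tens1_mulE WrW enum_rankK.
rewrite /mxtrace mulr_suml; apply: eq_bigr => p _.
by case: (i == enum_rank x); case: (j == enum_rank x); rewrite /= ?mul1r ?mulr1 ?mul0r ?mulr0.
Qed.
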